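(* Let $\mathcal W$ be a discrete memoryless channel from a finite set $\mathcal X$ to a finite set $\mathcal Y$ and $\alpha\in(0,1)\cup(1,\infty)$. Then $$U_\alpha(\mathcal W)=\min_{Q_Y\in\mathcal P(\mathcal Y)}\max_{x\in\mathcal X}D_\alpha\big(Q_Y\|\mathcal W(\cdot|x)\big).$$
   Context: For $\alpha\in(0,1)\cup(1,\infty)$, $D_\alpha(P\|Q)=\frac1{\alpha-1}\log\sum_{x:P(x)>0}P(x)^\alpha Q(x)^{1-\alpha}$ ($+\infty$ if $\alpha>1$ and $P\not\ll Q$). The Rényi $\alpha$-umlaut information of the channel is $U_\alpha(\mathcal W)=\max_{P_X\in\mathcal P(\mathcal X)}\min_{Q_Y\in\mathcal P(\mathcal Y)}D_\alpha(P_X\times Q_Y\|P_{XY})$ with $P_{XY}(x,y)=P_X(x)\mathcal W(y|x)$. *)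

(* Defs.v *)
From HB Require Import structures.
From mathcomp Require Import all_boot all_order all_algebra.
From mathcomp Require Import all_classical all_reals all_analysis.
Set Implicit Arguments. Unset Strict Implicit. Unset Printing Implicit Defensive.
Import Order.TTheory GRing.Theory Num.Theory.
Local Open Scope classical_set_scope.
Local Open Scope ring_scope.

Definition is_pmf (R : realType) (T : finType) (P : T -> R) : Prop :=
  (forall t, 0 <= P t) /\ \sum_(t : T) P t = 1.

Definition pmfs (R : realType) (T : finType) : set (T -> R) :=
  [set P | is_pmf P].

(* Renyi divergence of order a (a in (0,1) u (1,oo)), extended-real valued,
   with the conventions log 0 = -oo and D = +oo if a > 1 and P not << Q. *)
Definition renyiD (R : realType) (T : finType) (a : R) (P Q : T -> R) : \bar R :=
  if (1 < a) && ~~ [forall t, (Q t == 0) ==> (P t == 0)] then +oo%E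
  else
    let s := \sum_(t : T | 0 < P t) P t `^ a * Q t `^ (1 - a) in
    if s == 0 then (if a < 1 then +oo%E else -oo%E)
    else ((a - 1)^-1 * ln s)%:E.

Definition prodPQ (R : realType) (X Y : finType) (P : X -> R) (Q : Y -> R)
  : X * Y -> R := fun xy => P xy.1 * Q xy.2.
Definition jointPW (R : realType) (X Y : finType) (P : X -> R) (W : X -> Y -> R)
  : X * Y -> R := fun xy => P xy.1 * W xy.1 xy.2.

Definition umlautU (R : realType) (X Y : finType) (a : R) (W : X -> Y -> R) : \bar R :=
  ereal_sup [set ereal_inf [set renyiD a (prodPQ P Q) (jointPW P W) | Q in @pmfs R Y]
            | P in @pmfs R X].

Definition maxD (R : realType) (X Y : finType) (a : R) (W : X -> Y -> R) (Q : Y -> R)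
  : \bar R := \big[maxe/-oo%E]_(x : X) renyiD a Q (W x).

(* Main.v *)
Require Import Defs.
From HB Require Import structures.
From mathcomp Require Import all_boot all_order all_algebra.
From mathcomp Require Import all_classical all_reals all_analysis.
From mathcomp Require Import lra ring.
Import Order.TTheory GRing.Theory Num.Theory.
Local Open Scope classical_set_scope.
Local Open Scope ring_scope.
Import numFieldNormedType.Exports.
Import ArrowAsProduct.

Lemma eqle (R : numDomainType) (x y : R) : x = y -> x <= y.
Proof. by move=> ->. Qed.

Lemma ln1p_ge (R : realType) (u : R) : 0 <= u <= 1 -> u - u ^+ 2 <= ln (1 + u).
Proof.
move=> /andP[u0 u1].
have u1p : 0 < 1 + u by rewrite ltr_pwDl.
have h : -1 < - (u / (1 + u)).
  rewrite ltrN2 ltr_pdivrMr // mul1r; lra.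
have := le_ln1Dx h.
have -> : 1 - u / (1 + u) = (1 + u)^-1.
  by field; rewrite gt_eqF.
rewrite lnV ?posrE // lerN2 => h2.
apply: le_trans h2.
rewrite ler_pdivlMr //.
have : 0 <= u ^+ 3 by rewrite exprn_ge0.
rewrite !expr2 exprS expr2; nra.
Qed.

Definition comb (R : realType) (Y : Type) (l : R) (Q1 Q2 : Y -> R) : Y -> R :=
  fun y => l * Q1 y + (1 - l) * Q2 y.
Arguments comb {R Y}.

Section Hedge.
Variables (R : realType) (X : finType) (Y : Type).
Variables (K : set (Y -> R)) (g : X -> (Y -> R) -> R) (v : R).
Hypothesis gK : forall x Q, K Q -> 0 <= g x Q <= 1.
Hypothesis convK : forall l Q1 Q2, 0 <= l <= 1 -> K Q1 -> K Q2 ->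
  K (comb l Q1 Q2) /\ forall x, g x (comb l Q1 Q2) <= l * g x Q1 + (1 - l) * g x Q2.
Hypothesis hv : forall Q, K Q -> exists x, v <= g x Q.
Hypothesis X0 : (0 < #|X|)%N.

Definition validP (P : X -> R) := (forall x, 0 < P x) /\ \sum_x P x = 1.

Section Run.
Variable eps : R.
Hypothesis eps0 : 0 < eps.
Hypothesis eps1 : eps <= 1.
Variable bad : (X -> R) -> (Y -> R).
Hypothesis hbad : forall P, validP P -> K (bad P) /\ \sum_x P x * g x (bad P) < v - eps.

Let eta := eps / 2.
Lemma eta_gt0 : 0 < eta.
Proof. rewrite /eta; have e0 := eps0; lra. Qed.

Definition nrm (w : X -> R) : X -> R := fun x => w x / \sum_z w z.

Fixpoint wt (n : nat) : X -> R :=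
  match n with
  | 0 => fun _ => 1
  | n.+1 => fun x => wt n x * (1 + eta * g x (bad (nrm (wt n))))
  end.

Let Qn n := bad (nrm (wt n)).

Lemma valid_nrm (w : X -> R) : (forall x, 0 < w x) -> validP (nrm w).
Proof.
move=> wp.
have [x0 _] : exists x0 : X, true.
  by case/card_gt0P: X0 => x _; exists x.
have S0 : 0 < \sum_z w z.
  rewrite (bigD1 x0) //= ltr_pwDl // sumr_ge0 // => i _; exact: ltW.
split => [x|]; first by rewrite /nrm divr_gt0.
by rewrite /nrm -mulr_suml mulfV // gt_eqF.
Qed.

Lemma wt_pos n : (forall x, 0 < wt n x) /\ K (Qn n).
Proof.
elim: n => [|n [IH1 IH2]] /=.
  have h : forall x : X, 0 < (fun=> 1 : R) x by [].
  by split => //; have [] := hbad _ (@valid_nrm _ h).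
have h : forall x, 0 < wt n.+1 x.
  move=> x /=; rewrite mulr_gt0 //.
  have := gK x _ IH2; case/andP => g0 _.
  have : 0 <= eta * g x (Qn n).
    rewrite mulr_ge0 // /eta. have e0 := eps0. lra.
  rewrite /Qn; lra.
by split => //; have [] := hbad _ (@valid_nrm _ h).
Qed.

Let S n := \sum_x wt n x.

Lemma S_pos n : 0 < S n.
Proof.
have [x0 _] : exists x0 : X, true by case/card_gt0P: X0 => x _; exists x.
have hp := proj1 (wt_pos n).
rewrite /S (bigD1 x0) //= ltr_pwDl // sumr_ge0 // => i _; exact/ltW.
Qed.

Lemma S_step n : S n.+1 <= S n * (1 + eta * (v - eps)).
Proof.
have [hp hK] := wt_pos n.
have [_ hlt] := hbad _ (@valid_nrm _ hp).
rewrite /S /=.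
under eq_bigr do rewrite mulrDr mulr1.
rewrite big_split /= mulrDr mulr1 lerD2l.
have -> : \sum_i wt n i * (eta * g i (bad (nrm (wt n)))) =
   (\sum_z wt n z) * (eta * \sum_x nrm (wt n) x * g x (bad (nrm (wt n)))).
  rewrite mulr_sumr mulr_sumr; apply: eq_bigr => x _.
  rewrite /nrm; field; have := S_pos n; rewrite /S => h; by rewrite gt_eqF.
rewrite ler_pM2l; last exact: (S_pos n).
rewrite ler_pM2l; last by rewrite /eta; have e0 := eps0; have e1 := eps1; lra.
exact: ltW.
Qed.

Lemma lnS_le n : ln (S n) <= ln (#|X|%:R) + n%:R * (eta * (v - eps)).
Proof.
have hc : 0 <= v - eps.
  have [hp hK] := wt_pos 0; have [_ hlt] := hbad _ (@valid_nrm _ hp).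
  apply: ltW; apply: le_lt_trans hlt; rewrite sumr_ge0 // => x _.
  rewrite mulr_ge0 //; first exact/ltW/(proj1 (@valid_nrm _ hp)).
  by case/andP: (gK x _ hK).
elim: n => [|n IH].
  by rewrite mul0r addr0 /S /= sumr_const.
have h1 : 0 < 1 + eta * (v - eps) by rewrite ltr_pwDl // mulr_ge0 // /eta; have e0 := eps0; have e1 := eps1; lra.
apply: le_trans (_ : ln (S n * (1 + eta * (v - eps))) <= _).
  rewrite ler_ln ?posrE ?S_pos ?mulr_gt0 ?S_pos //; exact: S_step.
rewrite lnM ?posrE ?S_pos //.
have h2 : ln (1 + eta * (v - eps)) <= eta * (v - eps).
  apply: le_ln1Dx; rewrite (@lt_le_trans _ _ 0) // ?mulr_ge0 // /eta; have e0 := eps0; have e1 := eps1; lra.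
apply: le_trans (lerD IH h2) _; rewrite -nat1r; apply: eqle; ring.
Qed.

Lemma lnwt_ge n x : eta * \sum_(t < n) g x (Qn t) - n%:R * eta ^+ 2 <= ln (wt n x).
Proof.
elim: n => [|n IH].
  by rewrite big_ord0 mulr0 mul0r subr0 /= ln1.
have [hp hK] := wt_pos n.
rewrite /= lnM ?posrE ?hp //; last first.
  have := gK x _ hK; case/andP => g0 _.
  have : 0 <= eta * g x (Qn n) by rewrite mulr_ge0 // ltW // eta_gt0.
  rewrite /Qn; lra.
rewrite big_ord_recr /= -nat1r.
have := gK x _ hK; case/andP => g0 g1.
have := @ln1p_ge _ (eta * g x (Qn n)).
have he : 0 <= eta * g x (Qn n) <= 1.
  apply/andP; split; first by rewrite mulr_ge0 // /eta; have e0 := eps0; have e1 := eps1; lra.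
  rewrite /eta; have e0 := eps0; have e1 := eps1; nra.
move=> /(_ he) h2.
have h3 : eta * g x (Qn n) - eta ^+ 2 <= eta * g x (Qn n) - (eta * g x (Qn n)) ^+ 2.
  rewrite lerD2l lerN2 exprMn -[leRHS]mulr1 ler_pM2l; last by rewrite exprn_gt0 // /eta; have e0 := eps0; have e1 := eps1; lra.
  by rewrite expr2; nra.
have := lerD IH (le_trans h3 h2).
rewrite /Qn; apply: le_trans; apply: eqle; ring.
Qed.

Lemma lnwt_le n x : ln (wt n x) <= ln (S n).
Proof.
have [hp _] := wt_pos n.
rewrite ler_ln ?posrE ?hp ?S_pos // /S (bigD1 x) //= lerDl sumr_ge0 // => i _.
exact/ltW.
Qed.

Fixpoint avg (n : nat) : Y -> R :=
  match n with
  | 0 => Qn 0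
  | n.+1 => comb (n.+1%:R / n.+2%:R) (avg n) (Qn n.+1)
  end.

Lemma avg_prop n : K (avg n) /\ forall x, n.+1%:R * g x (avg n) <= \sum_(t < n.+1) g x (Qn t).
Proof.
elim: n => [|n [IH1 IH2]].
  by split; [exact: (proj2 (wt_pos 0)) | move=> x; rewrite big_ord1 mul1r].
have hl : 0 <= (n.+1%:R / n.+2%:R : R) <= 1.
  apply/andP; split; first by rewrite divr_ge0.
  by rewrite ler_pdivrMr ?ltr0n // mul1r ler_nat.
have [hK hg] := @convK _ _ _ hl IH1 (proj2 (wt_pos n.+1)).
split => // x.
rewrite big_ord_recr /=.
apply: le_trans (_ : n.+2%:R * (n.+1%:R / n.+2%:R * g x (avg n) +
    (1 - n.+1%:R / n.+2%:R) * g x (Qn n.+1)) <= _).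
  by rewrite ler_pM2l ?ltr0n.
have -> : n.+2%:R * (n.+1%:R / n.+2%:R * g x (avg n) +
    (1 - n.+1%:R / n.+2%:R) * g x (Qn n.+1)) =
    n.+1%:R * g x (avg n) + g x (Qn n.+1) :> R.
  by field; rewrite -natrD pnatr_eq0.
by rewrite lerD2r.
Qed.

Lemma run_false : False.
Proof.
have e0 := eps0; have e1 := eps1.
pose c := ln (#|X|%:R : R).
have hc : 0 <= c by rewrite /c ln_ge0 // ler1n.
pose N := Num.Def.archi_bound (4 * c / eps ^+ 2).
have hN : 4 * c / eps ^+ 2 < N%:R.
  by apply: archi_boundP; rewrite divr_ge0 ?mulr_ge0 ?exprn_ge0 //; lra.
have [hK hg] := avg_prop N.
have [x hx] := hv _ hK.
have h1 := lnwt_ge N.+1 x.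
have h2 := lnwt_le N.+1 x.
have h3 := lnS_le N.+1.
have h4 := hg x.
have h5 : eta * (N.+1%:R * v) <= eta * \sum_(t < N.+1) g x (Qn t).
  rewrite ler_pM2l; last exact: eta_gt0.
  apply: le_trans h4; rewrite ler_pM2l ?ltr0n //.
have h6 : N.+1%:R * (eps ^+ 2 / 4) <= c.
  move: h1 h2 h3 h5; rewrite /eta /c; set T := (N.+1)%:R.
  rewrite !expr2 => h1 h2 h3 h5; lra.
have : 4 * c / eps ^+ 2 < N.+1%:R by apply: (lt_le_trans hN); rewrite ler_nat.
rewrite ltr_pdivrMr ?exprn_gt0 //.
move: h6; set T := (N.+1)%:R; rewrite expr2 => h6; nra.
Qed.

End Run.

Lemma hedge eps : 0 < eps ->
  exists P : X -> R, [/\ forall x, 0 < P x, \sum_x P x = 1 &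
    forall Q, K Q -> v - eps <= \sum_x P x * g x Q].
Proof.
wlog eps1 : eps / eps <= 1.
  move=> H e0; have [le1|lt1] := leP eps 1; first exact: H.
  have [P [h1 h2 h3]] := H 1 (lexx _) ltr01.
  exists P; split => // Q KQ; apply: le_trans (h3 Q KQ); rewrite lerD2l lerN2; exact: ltW.
move=> e0.
have [//|nH] := pselect (exists P : X -> R, [/\ forall x, 0 < P x, \sum_x P x = 1 &
    forall Q, K Q -> v - eps <= \sum_x P x * g x Q]).
exfalso.
have bad0 : forall P : X -> R, exists Q : Y -> R, validP P ->
    K Q /\ \sum_x P x * g x Q < v - eps.
  move=> P.
  have [[Q [h1 h2]]|nQ] := pselect (exists Q, K Q /\ \sum_x P x * g x Q < v - eps).
    by exists Q.
  exists (fun _ : Y => 0 : R) => -[hp hs]; exfalso; apply: nH; exists P; split => // Q KQ.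
  rewrite leNgt; apply/negP => hlt; apply: nQ; by exists Q.
pose bad := fun P => proj1_sig (cid (bad0 P)).
apply: (@run_false eps e0 eps1 bad) => P hP.
exact: (proj2_sig (cid (bad0 P)) hP).
Qed.

End Hedge.

Lemma pw_cont (R : realType) (a : R) : 0 < a -> continuous (fun q : R => (Num.max q 0) `^ a).
Proof.
move=> a0 q0; rewrite /continuous_at.
have [q0neg|q0pos|->] := ltgtP q0 0.
- rewrite powR0 ?gt_eqF //.
  apply: cvg_trans (near_eq_cvg _) (cvg_cst 0).
  near=> q; rewrite max_r ?powR0 ?gt_eqF //; apply: ltW.
  near: q; exact: lt_nbhsl.
- have h : {near q0, (fun q => expR (a * ln q)) =1 (fun q : R => (Num.max q 0) `^ a)}.
    near=> q.
    have hq : 0 < q by near: q; exact: lt_nbhsr.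
    by rewrite max_l ?ltW // /powR gt_eqF.
  have -> : q0 `^ a = expR (a * ln q0) by rewrite /powR gt_eqF.
  apply: cvg_trans (near_eq_cvg h) _.
  apply: (@continuous_comp _ _ _ (fun q => a * ln q) expR).
    apply: cvgMl_tmp; exact: continuous_ln.
  exact: continuous_expR.
- apply/cvgrPdist_le => e e0.
  have d0 : 0 < e `^ a^-1 by rewrite powR_gt0.
  near=> t.
  rewrite powR0 ?gt_eqF // sub0r normrN ger0_norm ?powR_ge0 //.
  have -> : e = (e `^ a^-1) `^ a by rewrite -powRrM mulVf ?gt_eqF // powRr1 // ltW.
  apply: ge0_ler_powR.
  - exact: ltW.
  - by rewrite nnegrE le_max lexx orbT.
  - by rewrite nnegrE ltW.
  - rewrite ge_max (ltW d0) andbT.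
    near: t; exact: nbhs0_ltW.
Unshelve. all: by end_near.
Qed.

Lemma powR_conv (R : realType) (p l q1 q2 : R) : 1 <= p -> 0 <= l <= 1 -> 0 <= q1 -> 0 <= q2 ->
  (l * q1 + (1 - l) * q2) `^ p <= l * q1 `^ p + (1 - l) * q2 `^ p.
Proof.
move=> p1 /andP[l0 l1] h1 h2.
have := @convex_powR R p p1 (Itv01 l0 l1) q1 q2.
rewrite !inE /= !in_itv /= h1 h2 => /(_ erefl erefl).
by rewrite !convRE /=.
Qed.

Lemma powR_conc (R : realType) (p l q1 q2 : R) : 0 < p <= 1 -> 0 <= l <= 1 -> 0 <= q1 -> 0 <= q2 ->
  l * q1 `^ p + (1 - l) * q2 `^ p <= (l * q1 + (1 - l) * q2) `^ p.
Proof.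
move=> /andP[p0 p1] hl h1 h2.
have hl' := hl; move/andP: hl' => [l0 l1].
have pi1 : 1 <= p^-1 by rewrite invf_ge1.
have := @powR_conv R _ _ _ _ pi1 hl (powR_ge0 q1 p) (powR_ge0 q2 p).
rewrite -!powRrM mulfV ?gt_eqF // !powRr1 // => h.
have := @ge0_ler_powR R p (ltW p0) _ _ _ _ h.
rewrite -powRrM mulVf ?gt_eqF // powRr1; first apply.
- by rewrite nnegrE powR_ge0.
- by rewrite nnegrE addr_ge0 // mulr_ge0 // subr_ge0.
- by rewrite addr_ge0 // mulr_ge0 ?powR_ge0 // subr_ge0.
Qed.

Section Core.
Variables (R : realType) (X Y : finType).

Definition Kset (keep : pred Y) : set (Y -> R) :=
  [set Q | (forall y, 0 <= Q y) /\ (forall y, ~~ keep y -> Q y = 0) /\ \sum_y Q y = 1].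

Lemma cont_proj (y : Y) : continuous (fun Q : Y -> R => Q y).
Proof. exact: (@proj_continuous Y (fun _ => R) y). Qed.

Lemma cont_sum (F : Y -> (Y -> R) -> R) :
  (forall y, continuous (F y)) -> continuous (fun Q => \sum_y F y Q).
Proof.
move=> hF.
have H : forall s, continuous (fun Q => \sum_(y <- s) F y Q).
  elim => [|y s IH].
    have -> : (fun Q : Y -> R => \sum_(y <- [::]) F y Q) = (fun=> 0).
      by apply: funext => Q'; rewrite big_nil.
    exact: cst_continuous.
  have -> : (fun Q => \sum_(y0 <- y :: s) F y0 Q) = (F y + fun Q => \sum_(y0 <- s) F y0 Q).
    by apply: funext => Q'; rewrite big_cons.
  move=> Q; apply: continuousD; [exact: hF|exact: IH].
have -> : (fun Q => \sum_y F y Q) = (fun Q => \sum_(y <- enum Y) F y Q).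
  by apply: funext => Q'; rewrite big_enum.
exact: H.
Qed.

Lemma Kset_compact keep : compact (Kset keep).
Proof.
have hbox : compact [set Q : Y -> R | forall y, `[0, 1]%classic (Q y)].
  apply: (@tychonoff Y (fun _ => R) (fun _ => `[0, 1]%classic)) => y.
  exact: segment_compact.
have hcl : closed [set Q : Y -> R | (forall y, 0 <= Q y) /\
    (forall y, ~~ keep y -> Q y = 0) /\ \sum_y Q y = 1].
  have -> : [set Q : Y -> R | (forall y, 0 <= Q y) /\
    (forall y, ~~ keep y -> Q y = 0) /\ \sum_y Q y = 1] =
    (\bigcap_(y in setT) ((fun Q : Y -> R => Q y) @^-1` [set r : R | 0 <= r])) `&`
    ((\bigcap_(y in setT) ((fun Q : Y -> R => Q y) @^-1`
        [set r : R | ~~ keep y -> r = 0])) `&`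
    ((fun Q : Y -> R => \sum_y Q y) @^-1` [set r : R | r = 1])).
    apply/seteqP; split => Q /=.
      by move=> [h1 [h2 h3]]; split; [move=> y _; exact: h1|split => // y _; exact: h2].
    by move=> [h1 [h2 h3]]; split; [move=> y; exact: h1|split => // y; exact: h2].
  apply: closedI; [|apply: closedI].
  - apply: closed_bigI => y _; apply: preimage_closed; last exact: closed_ge.
    by move=> Q _; exact: cont_proj.
  - apply: closed_bigI => y _; apply: preimage_closed; last first.
      case: (boolP (keep y)) => ky.
        have -> : [set r : R | ~~ true -> r = 0] = setT.
          by apply/seteqP; split => // r _.
        exact: closedT.
      have -> : [set r : R | ~~ false -> r = 0] = [set r | r = 0].
        by apply/seteqP; split => r /=; [apply|move=> ->].
      exact: closed_eq.
    by move=> Q _; exact: cont_proj.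
  - apply: preimage_closed; last exact: closed_eq.
    move=> Q _; apply: cont_sum => y; exact: cont_proj.
apply: subclosed_compact hcl hbox _.
move=> Q [h1 [h2 h3]] y /=; rewrite in_itv /= h1 /=.
rewrite -h3 (bigD1 y) //= lerDl sumr_ge0 //.
Qed.

Lemma Kset_comb keep l Q1 Q2 : 0 <= l <= 1 -> Kset keep Q1 -> Kset keep Q2 ->
  Kset keep (comb l Q1 Q2).
Proof.
move=> /andP[l0 l1] [a1 [b1 c1]] [a2 [b2 c2]]; split; last split.
- move=> y; rewrite /comb addr_ge0 // mulr_ge0 // subr_ge0 //.
- by move=> y ky; rewrite /comb b1 // b2 // !mulr0 addr0.
- rewrite /comb big_split /= -!mulr_sumr c1 c2; ring.
Qed.

Variables (keep : pred Y) (psi : X -> (Y -> R) -> R) (B : R).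
Hypothesis X0 : (0 < #|X|)%N.
Hypothesis K0 : exists Q, Kset keep Q.
Hypothesis psi_cont : forall x, continuous (psi x).
Hypothesis B0 : 0 < B.
Hypothesis psi_bd : forall x Q, Kset keep Q -> 0 <= psi x Q <= B.
Hypothesis psi_conv : forall x l Q1 Q2, 0 <= l <= 1 -> Kset keep Q1 -> Kset keep Q2 ->
  psi x (comb l Q1 Q2) <= l * psi x Q1 + (1 - l) * psi x Q2.

Definition hmax (Q : Y -> R) := \big[Num.max/0]_x psi x Q.

Lemma hmax_cont : continuous hmax.
Proof.
have H : forall s, continuous (fun Q => \big[Num.max/0]_(x <- s) psi x Q).
  elim => [|x s IH].
    have -> : (fun Q : Y -> R => \big[Num.max/0]_(x <- [::]) psi x Q) = (fun=> 0).
      by apply: funext => Q'; rewrite big_nil.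
    exact: cst_continuous.
  have -> : (fun Q => \big[Num.max/0]_(x0 <- x :: s) psi x0 Q) =
      ((psi x) \max (fun Q => \big[Num.max/0]_(x0 <- s) psi x0 Q)).
    by apply: funext => Q'; rewrite big_cons.
  move=> Q; apply: continuous_max; [exact: psi_cont|exact: IH].
have -> : hmax = (fun Q => \big[Num.max/0]_(x <- enum X) psi x Q).
  by apply: funext => Q'; rewrite /hmax big_enum.
exact: H.
Qed.

Lemma core : exists Qs, [/\ Kset keep Qs, (forall Q, Kset keep Q -> hmax Qs <= hmax Q) &
  forall eps, 0 < eps -> exists P : X -> R, [/\ forall x, 0 < P x, \sum_x P x = 1 &
    forall Q, Kset keep Q -> hmax Qs - eps <= \sum_x P x * psi x Q]].
Proof.
have [Qs KQs hmin] : exists2 Qs, Qs \in Kset keep & forall Q, Q \in Kset keep -> hmax Qs <= hmax Q.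
  apply: compact_EVT_min.
  - by case: K0 => Q KQ; exists Q.
  - exact: Kset_compact.
  - exact: continuous_subspaceT hmax_cont.
have KQs' : Kset keep Qs by rewrite inE in KQs.
exists Qs; split => //.
  by move=> Q KQ; apply: hmin; rewrite inE.
move=> eps e0.
have [x0 _] : exists x0 : X, true by case/card_gt0P: X0 => x _; exists x.
have gK : forall x Q, Kset keep Q -> 0 <= psi x Q / B <= 1.
  move=> x Q KQ; have /andP[h1 h2] := psi_bd x _ KQ.
  by apply/andP; split; [rewrite divr_ge0 // ltW | rewrite ler_pdivrMr // mul1r].
have cK : forall l Q1 Q2, 0 <= l <= 1 -> Kset keep Q1 -> Kset keep Q2 ->
    Kset keep (comb l Q1 Q2) /\ forall x, psi x (comb l Q1 Q2) / B <=
      l * (psi x Q1 / B) + (1 - l) * (psi x Q2 / B).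
  move=> l Q1 Q2 hl K1 K2; split; first exact: Kset_comb.
  move=> x; have := psi_conv x _ _ _ hl K1 K2.
  rewrite -(@ler_pM2r _ B^-1) ?invr_gt0 // => h; apply: le_trans h _.
  by apply: eqle; field; rewrite gt_eqF.
have hv : forall Q, Kset keep Q -> exists x, hmax Qs / B <= psi x Q / B.
  move=> Q KQ.
  have : hmax Qs <= hmax Q by apply: hmin; rewrite inE.
  move/bigmax_geP => [h|[x _ hx]].
    exists x0; rewrite ler_pM2r ?invr_gt0 //; apply: le_trans h _.
    by have /andP[] := psi_bd x0 _ KQ.
  by exists x; rewrite ler_pM2r ?invr_gt0.
have eB : 0 < eps / B by apply: divr_gt0.
have [P [h1 h2 h3]] := @hedge R X Y (Kset keep) (fun x Q => psi x Q / B) (hmax Qs / B) gK cK hv X0 _ eB.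
exists P; split => // Q KQ.
have := h3 Q KQ.
have -> : hmax Qs / B - eps / B = (hmax Qs - eps) / B by field; rewrite gt_eqF.
have -> : \sum_x P x * (psi x Q / B) = (\sum_x P x * psi x Q) / B.
  by rewrite mulr_suml; apply: eq_bigr => x _; rewrite mulrA.
by rewrite ler_pM2r ?invr_gt0.
Qed.

End Core.
Arguments Kset {R Y}.
Arguments hmax {R X Y}.

Lemma le_by_reals (R : realType) (x y : \bar R) :
  (forall r : R, (r%:E < x)%E -> (r%:E <= y)%E) -> (x <= y)%E.
Proof.
case: x => [x| |]; case: y => [y| |] // h; rewrite ?leey ?leNye //.
- rewrite lee_fin leNgt; apply/negP => hyx.
  have h' := h ((x + y) / 2); rewrite !lte_fin !lee_fin in h'.
  have : (x + y) / 2 <= y by apply: h'; lra.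
  lra.
- have h' := h (x - 1); rewrite lte_fin in h'.
  have : ((x - 1)%:E <= -oo)%E by apply: h'; lra.
  by [].
- have h' := h (y + 1); rewrite lee_fin in h'.
  have : y + 1 <= y by apply: h'; exact: ltry.
  move=> hh; exfalso; clear h h'; lra.
- have h' := h 0.
  have : ((0:R)%:E <= -oo)%E by apply: h'; exact: ltry.
  by [].
Qed.

Section Renyi.
Variables (R : realType) (X Y : finType) (W : X -> Y -> R) (a : R).
Hypothesis ha0 : 0 < a.
Hypothesis ha1 : a != 1.
Hypothesis HW : forall x, is_pmf (W x).
Hypothesis HX : (0 < #|X|)%N.

Definition sx x (Q : Y -> R) := \sum_y Q y `^ a * W x y `^ (1 - a).
Definition acb (Q : Y -> R) x := [forall y, (W x y == 0) ==> (Q y == 0)].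
Definition Fe (s : R) : \bar R :=
  if s == 0 then (if a < 1 then +oo%E else -oo%E) else ((a - 1)^-1 * ln s)%:E.

Lemma sum_pos_eq (Q : Y -> R) (c : Y -> R) : (forall y, 0 <= Q y) ->
  \sum_(y | 0 < Q y) Q y `^ a * c y = \sum_y Q y `^ a * c y.
Proof.
move=> Q0; rewrite big_mkcond; apply: eq_bigr => y _.
case: ifP => // /negbT; rewrite lt_def negb_and negbK Q0 orbF => /eqP ->.
by rewrite powR0 ?mul0r // gt_eqF.
Qed.

Lemma renyi1 x (Q : Y -> R) : (forall y, 0 <= Q y) ->
  renyiD a Q (W x) = if (1 < a) && ~~ acb Q x then +oo%E else Fe (sx x Q).
Proof.
move=> Q0; rewrite /renyiD /Fe /sx /acb sum_pos_eq //.
Qed.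

Lemma renyi2 (P : X -> R) (Q : Y -> R) : (forall x, 0 <= P x) -> (forall y, 0 <= Q y) ->
  renyiD a (prodPQ P Q) (jointPW P W) =
  if (1 < a) && ~~ [forall x, (0 < P x) ==> acb Q x] then +oo%E
  else Fe (\sum_x P x * sx x Q).
Proof.
move=> P0 Q0.
have hac : [forall t, (jointPW P W t == 0) ==> (prodPQ P Q t == 0)] =
    [forall x, (0 < P x) ==> acb Q x].
  apply/forallP/forallP.
  - move=> h x; apply/implyP => px; apply/forallP => y; apply/implyP => /eqP wxy.
    have := h (x, y); rewrite /jointPW /prodPQ /= wxy mulr0 eqxx /=.
    by rewrite mulf_eq0 gt_eqF.
  - move=> h [x y]; rewrite /jointPW /prodPQ /=; apply/implyP.
    rewrite mulf_eq0 => /orP[/eqP ->|wxy]; first by rewrite mul0r.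
    have [px|] := ltP 0 (P x).
      have := h x; rewrite px /= => /forallP /(_ y); rewrite wxy /= => /eqP ->.
      by rewrite mulr0.
    move=> px; have -> : P x = 0 by apply/le_anti; rewrite px P0.
    by rewrite mul0r.
have hs : \sum_(t | 0 < prodPQ P Q t) prodPQ P Q t `^ a * jointPW P W t `^ (1 - a) =
    \sum_x P x * sx x Q.
  rewrite big_mkcond.
  have -> : \sum_x P x * sx x Q = \sum_x \sum_y (if 0 < prodPQ P Q (x, y) then
      prodPQ P Q (x, y) `^ a * jointPW P W (x, y) `^ (1 - a) else 0).
    apply: eq_bigr => x _.
  rewrite /sx mulr_sumr; apply: eq_bigr => y _; apply: esym.
  rewrite /prodPQ /jointPW /=.
  case: ifP => hpos.
    rewrite !powRM ?P0 ?Q0 //; last by case: (HW x) => h _; exact: h.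
    have -> : P x `^ a * Q y `^ a * (P x `^ (1 - a) * W x y `^ (1 - a)) =
       (P x `^ a * P x `^ (1 - a)) * (Q y `^ a * W x y `^ (1 - a)) by ring.
    rewrite -powRD; last by rewrite subrKC oner_eq0.
    by rewrite subrKC powRr1 ?P0.
  move/negbT: hpos; rewrite lt_def negb_and negbK mulr_ge0 ?P0 ?Q0 // orbF.
  rewrite mulf_eq0 => /orP[/eqP ->|/eqP ->]; first by rewrite !mul0r.
  by rewrite powR0 ?gt_eqF // !mul0r mulr0.
  by rewrite pair_bigA; apply: eq_bigr => -[x y].
by rewrite /renyiD hac hs /Fe.
Qed.


Definition J (P : X -> R) (Q : Y -> R) := renyiD a (prodPQ P Q) (jointPW P W).

Lemma assemble (V : \bar R) (Qs : Y -> R) :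
  is_pmf Qs -> maxD a W Qs = V ->
  (forall Q, is_pmf Q -> (V <= maxD a W Q)%E) ->
  (forall P, is_pmf P -> (J P Qs <= V)%E) ->
  (forall r : R, (r%:E < V)%E -> exists2 P, is_pmf P & forall Q, is_pmf Q -> (r%:E <= J P Q)%E) ->
  exists2 Q : Y -> R, is_pmf Q &
    (forall Q' : Y -> R, is_pmf Q' -> (maxD a W Q <= maxD a W Q')%E) /\
    umlautU a W = maxD a W Q.
Proof.
move=> hQs hV hmin hJ hlow; exists Qs => //; rewrite hV; split => //.
rewrite /umlautU; apply/le_anti/andP; split.
  apply: ge_ereal_sup => z [P hP <-].
  apply: le_trans (hJ P hP).
  by apply: ereal_inf_lbound; exists Qs.
apply: le_by_reals => r hr; have [P hP hJP] := hlow r hr.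
apply: le_ereal_sup_tmp; eexists; first by exists P.
apply: le_ereal_inf_tmp => z [Q hQ <-]; exact: hJP.
Qed.


Lemma pmf_pos (T : finType) (Q : T -> R) : is_pmf Q -> exists y, 0 < Q y.
Proof.
move=> [Q0 Q1]; apply/not_existsP => h.
have : \sum_y Q y = 0.
  apply: big1 => y _; apply/le_anti; rewrite Q0 andbT leNgt; apply/negP => hy.
  by apply: (h y).
by rewrite Q1; apply/eqP; rewrite oner_eq0.
Qed.

Lemma sx_ge0 x Q : (forall y, 0 <= Q y) -> 0 <= sx x Q.
Proof. by move=> Q0; rewrite sumr_ge0 // => y _; rewrite mulr_ge0 ?powR_ge0. Qed.

Definition Bt := \sum_x \sum_y W x y `^ (1 - a) + 1.

Lemma Bt_gt0 : 0 < Bt.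
Proof.
rewrite /Bt ltr_pwDr // sumr_ge0 // => x _; rewrite sumr_ge0 // => y _.
exact: powR_ge0.
Qed.

Lemma sx_le x Q : is_pmf Q -> sx x Q <= Bt.
Proof.
move=> [Q0 Q1].
apply: le_trans (_ : \sum_x \sum_y W x y `^ (1 - a) <= _); last by rewrite /Bt lerDl.
apply: le_trans (_ : \sum_y W x y `^ (1 - a) <= _).
  apply: ler_sum => y _; rewrite -[leRHS]mul1r ler_wpM2r ?powR_ge0 //.
  have -> : (1 : R) = 1 `^ a by rewrite powR1.
  apply: ge0_ler_powR; rewrite ?nnegrE //; first exact: ltW.
  by rewrite -Q1 (bigD1 y) //= lerDl sumr_ge0.
rewrite (bigD1 x) //= lerDl sumr_ge0 // => x' _; rewrite sumr_ge0 // => y _.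
exact: powR_ge0.
Qed.

Definition sxc x (Q : Y -> R) := \sum_y (Num.max (Q y) 0) `^ a * W x y `^ (1 - a).

Lemma sxc_cont x : continuous (sxc x).
Proof.
apply: cont_sum => y Q.
apply: (@continuousM R _ (fun Q : Y -> R => (Num.max (Q y) 0) `^ a) (fun=> W x y `^ (1 - a))); last exact: cst_continuous.
apply: (@continuous_comp _ _ _ (fun Q : Y -> R => Q y) (fun q => (Num.max q 0) `^ a)).
  exact: cont_proj.
exact: pw_cont.
Qed.

Lemma sxcE x Q : (forall y, 0 <= Q y) -> sxc x Q = sx x Q.
Proof. by move=> Q0; apply: eq_bigr => y _; rewrite max_l. Qed.


Lemma W0 x y : 0 <= W x y.
Proof. by case: (HW x) => h _; exact: h. Qed.

Lemma FeE s : 0 < s -> Fe s = ((a - 1)^-1 * ln s)%:E.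
Proof. by move=> s0; rewrite /Fe gt_eqF. Qed.

Lemma sum_pos (T : finType) (F : T -> R) (t : T) : (forall i, 0 <= F i) -> 0 < F t ->
  0 < \sum_i F i.
Proof. by move=> F0 Ft; rewrite (bigD1 t) //= ltr_pwDl // sumr_ge0. Qed.

Section Gt1.
Hypothesis a1 : 1 < a.

Definition keep1 : pred Y := fun y => [forall x, 0 < W x y].

Lemma K1_acb Q x : Kset keep1 Q -> acb Q x.
Proof.
move=> [Q0 [Qk _]]; apply/forallP => y; apply/implyP => /eqP wxy.
rewrite Qk //; apply/negP => /forallP /(_ x); by rewrite wxy ltxx.
Qed.

Lemma notK1_acb Q : is_pmf Q -> ~ Kset keep1 Q -> exists x, ~~ acb Q x.
Proof.
move=> [Q0 Q1] nK.
have [y hy] : exists y, ~~ keep1 y /\ Q y != 0.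
  apply/not_existsP => h; apply: nK; split => //; split => // y ky.
  by case: (eqVneq (Q y) 0) => // hq; exfalso; exact: (h y (conj ky hq)).
case: hy => /forallPn [x hx] qy.
exists x; apply/forallPn; exists y; rewrite negb_imply qy andbT.
by apply/eqP/le_anti; rewrite W0 andbT leNgt.
Qed.

Lemma K1_sx_pos Q x : Kset keep1 Q -> 0 < sx x Q.
Proof.
move=> hK; have hK' := hK; move: hK' => [Q0 [Qk Q1]].
have [y qy] := @pmf_pos Y Q (conj Q0 Q1).
apply: (@sum_pos Y _ y) => [y'|]; first by rewrite mulr_ge0 ?powR_ge0.
have ky : keep1 y by case: (boolP (keep1 y)) => // nk; move: qy; rewrite Qk // ltxx.
rewrite mulr_gt0 ?powR_gt0 //; by move/forallP: ky.
Qed.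

Lemma renyi_K1 Q x : Kset keep1 Q -> renyiD a Q (W x) = ((a - 1)^-1 * ln (sx x Q))%:E.
Proof.
move=> hK; rewrite renyi1; last by case: hK.
by rewrite K1_acb // andbF FeE // K1_sx_pos.
Qed.

Lemma renyi_notK1 Q : is_pmf Q -> ~ Kset keep1 Q -> maxD a W Q = +oo%E.
Proof.
move=> hQ nK; have [x hx] := notK1_acb _ hQ nK.
apply/eqP; rewrite eq_le leey /=.
apply: le_trans (le_bigmax _ _ x).
by rewrite renyi1; [rewrite a1 hx|case: hQ].
Qed.


Lemma sxc_comb_eq x l Q1 Q2 : 0 <= l <= 1 -> (forall y, 0 <= Q1 y) -> (forall y, 0 <= Q2 y) ->
  sxc x (comb l Q1 Q2) = \sum_y (l * Q1 y + (1 - l) * Q2 y) `^ a * W x y `^ (1 - a).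
Proof.
move=> /andP[l0 l1] h1 h2; apply: eq_bigr => y _; rewrite /comb max_l //.
by rewrite addr_ge0 // mulr_ge0 // subr_ge0.
Qed.

Lemma hmax_ge (psi : X -> (Y -> R) -> R) Q x : psi x Q <= hmax psi Q.
Proof. exact: le_bigmax. Qed.

Lemma case_gt1 : exists2 Q : Y -> R, is_pmf Q &
    (forall Q' : Y -> R, is_pmf Q' -> (maxD a W Q <= maxD a W Q')%E) /\
    umlautU a W = maxD a W Q.
Proof.
have a1' := a1; have ha0' := ha0.
have [x0 _] : exists x0 : X, true by case/card_gt0P: HX => x _; exists x.
have [y0 _] : exists y0 : Y, true by have [y _] := @pmf_pos _ _ (HW x0); exists y.
have [K0|nK0] := pselect (exists Q : Y -> R, Kset keep1 Q).
  have bd : forall x (Q : Y -> R), Kset keep1 Q -> 0 <= sxc x Q <= Bt.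
    move=> x Q [Q0 [Qk Q1]]; rewrite sxcE // sx_ge0 //=; exact: sx_le.
  have cv : forall x l (Q1 Q2 : Y -> R), 0 <= l <= 1 -> Kset keep1 Q1 -> Kset keep1 Q2 ->
      sxc x (comb l Q1 Q2) <= l * sxc x Q1 + (1 - l) * sxc x Q2.
    move=> x l Q1 Q2 hl [h1 _] [h2 _].
    rewrite sxc_comb_eq // !sxcE // /sx !mulr_sumr -big_split /=.
    apply: ler_sum => y _.
    apply: le_trans (_ : (l * Q1 y `^ a + (1 - l) * Q2 y `^ a) * W x y `^ (1 - a) <= _).
      rewrite ler_wpM2r ?powR_ge0 //; apply: powR_conv => //; exact: ltW.
    by apply: eqle; ring.
  have [Qs [KQs hmin hlow]] := @core R X Y keep1 sxc Bt HX K0 sxc_cont Bt_gt0 bd cv.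
  have Qs0 : forall y, 0 <= Qs y by case: KQs.
  have pmfK : forall Q : Y -> R, Kset keep1 Q -> is_pmf Q by move=> Q [h1 [_ h2]]; split.
  have hpos : forall Q : Y -> R, Kset keep1 Q -> 0 < hmax sxc Q.
    move=> Q KQ; apply: lt_le_trans (hmax_ge _ _ x0).
    rewrite sxcE; [exact: K1_sx_pos|by case: KQ].
  have maxD_K : forall Q : Y -> R, Kset keep1 Q -> maxD a W Q = ((a - 1)^-1 * ln (hmax sxc Q))%:E.
    move=> Q KQ; have Q0 : forall y, 0 <= Q y by case: KQ.
    have ai : 0 < (a - 1)^-1 by rewrite invr_gt0 subr_gt0.
    apply/le_anti/andP; split.
      apply: bigmax_le => [|x _]; first exact: leNye.
      rewrite renyi_K1 // lee_fin ler_pM2l // ler_ln ?posrE ?K1_sx_pos ?hpos //.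
      by rewrite -sxcE //; exact: hmax_ge.
    have : hmax sxc Q <= hmax sxc Q by [].
    move/bigmax_geP => [h|[x _ hx]].
      by have := hpos Q KQ; rewrite ltNge h.
    apply: le_trans (le_bigmax _ _ x).
    rewrite renyi_K1 // lee_fin ler_pM2l // ler_ln ?posrE ?K1_sx_pos ?hpos //.
    by rewrite -sxcE.
  apply: (@assemble (maxD a W Qs) Qs) => //.
  - exact: pmfK.
  - move=> Q hQ; have [KQ|nKQ] := pselect (Kset keep1 Q).
      rewrite !maxD_K // lee_fin ler_pM2l ?invr_gt0 ?subr_gt0 //.
      by rewrite ler_ln ?posrE ?hpos //; exact: hmin.
    by rewrite (renyi_notK1 _ hQ nKQ) leey.
  - move=> P hP; have P0 : forall x, 0 <= P x by case: hP.
    rewrite /J renyi2 //.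
    have -> : [forall x, (0 < P x) ==> acb Qs x].
      by apply/forallP => x; apply/implyP => _; exact: K1_acb.
    rewrite andbF.
    have [x1 px1] := @pmf_pos _ _ hP.
    have spos : 0 < \sum_x P x * sx x Qs.
      apply: (@sum_pos X _ x1) => [x|]; first by rewrite mulr_ge0 ?sx_ge0.
      by rewrite mulr_gt0 ?K1_sx_pos.
    rewrite FeE // maxD_K // lee_fin ler_pM2l ?invr_gt0 ?subr_gt0 //.
    rewrite ler_ln ?posrE ?hpos //.
    apply: le_trans (_ : \sum_x P x * hmax sxc Qs <= _).
      apply: ler_sum => x _; rewrite ler_wpM2l // -sxcE //; exact: hmax_ge.
    by rewrite -mulr_suml; case: hP => _ ->; rewrite mul1r.
  - move=> r; rewrite maxD_K // lte_fin => hr.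
    set v := hmax sxc Qs in hr.
    have v0 : 0 < v by exact: hpos.
    pose t := expR ((a - 1) * r).
    have t0 : 0 < t by exact: expR_gt0.
    have tv : t < v.
      rewrite /t -[v]lnK ?posrE // ltr_expR.
      have := hr; rewrite -(@ltr_pM2l _ (a - 1)) ?subr_gt0 // mulrA mulfV ?mul1r //.
      by rewrite subr_eq0 gt_eqF.
    have vt0 : 0 < v - t by rewrite subr_gt0.
    have [P [Ppos Psum Pbd]] := hlow (v - t) vt0.
    have hP : is_pmf P by split => // x; exact: ltW.
    exists P => // Q hQ; have Q0 : forall y, 0 <= Q y by case: hQ.
    have P0 : forall x, 0 <= P x by move=> x; exact: ltW.
    rewrite /J renyi2 //.
    have [KQ|nKQ] := pselect (Kset keep1 Q); last first.
      have [x hx] := notK1_acb _ hQ nKQ.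
      have -> : [forall x, (0 < P x) ==> acb Q x] = false.
        apply/negbTE/forallPn; exists x; by rewrite Ppos.
      by rewrite a1 /= leey.
    have -> : [forall x, (0 < P x) ==> acb Q x].
      by apply/forallP => x; apply/implyP => _; exact: K1_acb.
    rewrite andbF.
    have hs : t <= \sum_x P x * sx x Q.
      have := Pbd Q KQ; rewrite opprB addrCA subrr addr0.
      by under eq_bigr do rewrite sxcE //.
    rewrite FeE; last exact: lt_le_trans hs.
    rewrite lee_fin.
    have -> : r = (a - 1)^-1 * ln t.
      by rewrite /t expRK mulrA mulVf ?mul1r // subr_eq0 gt_eqF.
    rewrite ler_pM2l ?invr_gt0 ?subr_gt0 // ler_ln ?posrE //.
    exact: lt_le_trans hs.
pose Qs := fun y : Y => if y == y0 then 1 else 0 : R.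
have hQs : is_pmf Qs.
  split => [y|]; first by rewrite /Qs; case: ifP.
  by rewrite /Qs (bigD1 y0) //= eqxx big1 ?addr0 // => y /negbTE ->.
have allinf : forall Q, is_pmf Q -> maxD a W Q = +oo%E.
  move=> Q hQ; apply: renyi_notK1 => // KQ; apply: nK0; by exists Q.
apply: (@assemble +oo%E Qs) => //.
- exact: allinf.
- by move=> Q hQ; rewrite allinf.
- by move=> P _; rewrite leey.
- move=> r _.
  pose P := fun x : X => (#|X|%:R)^-1 : R.
  have nX : 0 < (#|X|%:R : R) by rewrite ltr0n.
  have Ppos : forall x, 0 < P x by move=> x; rewrite /P invr_gt0.
  have hP : is_pmf P.
    split => [x|]; first exact: ltW.
    by rewrite /P sumr_const -[_ *+ _]mulr_natr mulVf // gt_eqF.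
  exists P => // Q hQ.
  have Q0 : forall y, 0 <= Q y by case: hQ.
  have P0 : forall x, 0 <= P x by move=> x; exact: ltW.
  rewrite /J renyi2 //.
  have [x hx] := notK1_acb _ hQ (fun KQ => nK0 (ex_intro _ Q KQ)).
  have -> : [forall x, (0 < P x) ==> acb Q x] = false.
    apply/negbTE/forallPn; exists x; by rewrite Ppos.
  by rewrite a1 /= leey.
Qed.

End Gt1.


Section Lt1.
Hypothesis a1 : a < 1.

Let psi x (Q : Y -> R) := Bt - sxc x Q.
Let mn Q := Bt - hmax psi Q.

Lemma a1F : (1 < a) = false.
Proof. by apply/negbTE; rewrite -leNgt ltW. Qed.

Lemma Fe_anti s t : 0 <= s -> s <= t -> (Fe t <= Fe s)%E.
Proof.
move=> s0 st; have [s00|sn0] := eqVneq s 0; first by rewrite /Fe s00 eqxx a1 leey.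
have s0' : 0 < s by rewrite lt_def sn0.
have t0 : 0 < t by apply: lt_le_trans st.
rewrite !FeE // lee_fin ler_nM2l ?invr_lt0 ?subr_lt0 //.
by rewrite ler_ln ?posrE.
Qed.

Lemma mn_le Q x : is_pmf Q -> mn Q <= sx x Q.
Proof.
move=> [Q0 _]; rewrite /mn lerBlDr addrC -lerBlDr -sxcE //.
exact: (@hmax_ge psi Q x).
Qed.

Lemma mn_att Q : is_pmf Q -> exists x, sx x Q <= mn Q.
Proof.
move=> hQ; have Q0 : forall y, 0 <= Q y by case: hQ.
have [x0 _] : exists x0 : X, true by case/card_gt0P: HX => x _; exists x.
have : hmax psi Q <= hmax psi Q by [].
move/bigmax_geP => [h|[x _ hx]].
  exists x0; rewrite /mn; apply: le_trans (sx_le x0 _ hQ) _.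
  by move: h; lra.
exists x; move: hx; rewrite /psi /mn sxcE // => hx.
by rewrite lerBrDr addrC -lerBrDr.
Qed.

Lemma mn_ge0 Q : is_pmf Q -> 0 <= mn Q.
Proof.
move=> hQ; have [x hx] := mn_att _ hQ; apply: le_trans hx; apply: sx_ge0; by case: hQ.
Qed.

Lemma maxD_lt1 Q : is_pmf Q -> maxD a W Q = Fe (mn Q).
Proof.
move=> hQ; have Q0 : forall y, 0 <= Q y by case: hQ.
apply/le_anti/andP; split.
  apply: bigmax_le => [|x _]; first exact: leNye.
  rewrite renyi1 // a1F /=; apply: Fe_anti; [exact: mn_ge0|exact: mn_le].
have [x hx] := mn_att _ hQ.
apply: le_trans (le_bigmax _ _ x).
rewrite renyi1 // a1F /=; apply: Fe_anti => //; exact: sx_ge0.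
Qed.

Lemma case_lt1 : exists2 Q : Y -> R, is_pmf Q &
    (forall Q' : Y -> R, is_pmf Q' -> (maxD a W Q <= maxD a W Q')%E) /\
    umlautU a W = maxD a W Q.
Proof.
have a1' := a1; have ha0' := ha0.
have [x0 _] : exists x0 : X, true by case/card_gt0P: HX => x _; exists x.
have [y0 _] : exists y0 : Y, true by have [y _] := @pmf_pos _ _ (HW x0); exists y.
have KP : forall Q : Y -> R, Kset predT Q <-> is_pmf Q.
  by move=> Q; split => [[h1 [_ h2]]|[h1 h2]]; split.
pose Qd := fun y : Y => if y == y0 then 1 else 0 : R.
have hQd : is_pmf Qd.
  split => [y|]; first by rewrite /Qd; case: ifP.
  by rewrite /Qd (bigD1 y0) //= eqxx big1 ?addr0 // => y /negbTE ->.
have K0 : exists Q : Y -> R, Kset predT Q by exists Qd; apply/KP.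
have pc : forall x, continuous (psi x).
  move=> x Q; apply: (@continuousB R _ _ (fun=> Bt) (sxc x)); first exact: cst_continuous.
  exact: sxc_cont.
have bd : forall x (Q : Y -> R), Kset predT Q -> 0 <= psi x Q <= Bt.
  move=> x Q /KP hQ; have Q0 : forall y, 0 <= Q y by case: hQ.
  rewrite /psi sxcE // subr_ge0 sx_le //= lerBlDr lerDl; exact: sx_ge0.
have cv : forall x l (Q1 Q2 : Y -> R), 0 <= l <= 1 -> Kset predT Q1 -> Kset predT Q2 ->
    psi x (comb l Q1 Q2) <= l * psi x Q1 + (1 - l) * psi x Q2.
  move=> x l Q1 Q2 hl /KP [h1 _] /KP [h2 _].
  rewrite /psi sxc_comb_eq // !sxcE //.
  have -> : l * (Bt - sx x Q1) + (1 - l) * (Bt - sx x Q2) =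
      Bt - (l * sx x Q1 + (1 - l) * sx x Q2) by ring.
  rewrite lerD2l lerN2 /sx !mulr_sumr -big_split /=.
  apply: ler_sum => y _.
  apply: le_trans (_ : (l * Q1 y `^ a + (1 - l) * Q2 y `^ a) * W x y `^ (1 - a) <= _).
    by apply: eqle; ring.
  rewrite ler_wpM2r ?powR_ge0 //; apply: powR_conc => //.
  by rewrite ha0 ltW.
have [Qs [KQs hmin hlow]] := @core R X Y predT psi Bt HX K0 pc Bt_gt0 bd cv.
have hQs : is_pmf Qs by apply/KP.
have Qs0 : forall y, 0 <= Qs y by case: hQs.
apply: (@assemble (maxD a W Qs) Qs) => //.
- move=> Q hQ; rewrite !maxD_lt1 //; apply: Fe_anti; first exact: mn_ge0.
  by rewrite /mn lerD2l lerN2; apply: hmin; apply/KP.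
- move=> P hP; have P0 : forall x, 0 <= P x by case: hP.
  rewrite /J renyi2 // a1F /= maxD_lt1 //; apply: Fe_anti; first exact: mn_ge0.
  apply: le_trans (_ : \sum_x P x * sx x Qs <= _); last exact: lexx.
  apply: le_trans (_ : \sum_x P x * mn Qs <= _).
    by rewrite -mulr_suml; case: hP => _ ->; rewrite mul1r.
  by apply: ler_sum => x _; rewrite ler_wpM2l // mn_le.
- move=> r; rewrite maxD_lt1 // => hr.
  set v := mn Qs in hr.
  have v0 : 0 <= v by exact: mn_ge0.
  pose t := expR ((a - 1) * r).
  have t0 : 0 < t by exact: expR_gt0.
  have tv : v < t.
    have [v00|vn0] := eqVneq v 0; first by rewrite v00.
    have vp : 0 < v by rewrite lt_def vn0.
    move: hr; rewrite FeE // lte_fin => hr.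
    rewrite /t -[v]lnK ?posrE // ltr_expR.
    have := hr; rewrite -(@ltr_nM2l _ (a - 1)) ?subr_lt0 // mulrA mulfV ?mul1r //.
    by rewrite subr_eq0 lt_eqF.
  have vt0 : 0 < t - v by rewrite subr_gt0.
  have [P [Ppos Psum Pbd]] := hlow (t - v) vt0.
  have hP : is_pmf P by split => // x; exact: ltW.
  exists P => // Q hQ; have Q0 : forall y, 0 <= Q y by case: hQ.
  have P0 : forall x, 0 <= P x by move=> x; exact: ltW.
  rewrite /J renyi2 // a1F /=.
  have hs : \sum_x P x * sx x Q <= t.
    have := Pbd Q (proj2 (KP Q) hQ).
    have -> : \sum_x P x * psi x Q = Bt - \sum_x P x * sx x Q.
      rewrite /psi; under eq_bigr do rewrite sxcE // mulrBr.
      by rewrite sumrB -mulr_suml Psum mul1r.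
    move=> h; have hv : v = Bt - hmax psi Qs by []. lra.
  have -> : r%:E = Fe t.
    by rewrite FeE // /t expRK mulrA mulVf ?mul1r // subr_eq0 lt_eqF.
  by apply: Fe_anti => //; apply: sumr_ge0 => x _; rewrite mulr_ge0 // sx_ge0.
Qed.

End Lt1.

End Renyi.

Theorem mainTheorem12 (R : realType) (X Y : finType) (W : X -> Y -> R) (a : R)
  (HX : (0 < #|X|)%N) (HW : forall x, is_pmf (W x))
  (ha0 : 0 < a) (ha1 : a != 1) :
  exists2 Q : Y -> R, is_pmf Q &
    (forall Q' : Y -> R, is_pmf Q' -> (maxD a W Q <= maxD a W Q')%E) /\
    umlautU a W = maxD a W Q.
Proof.
have [a1|a1] : a < 1 \/ 1 < a.
  by case: (ltgtP a 1) => h; [left|right|move: ha1; rewrite h eqxx].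
- exact: case_lt1.
- exact: case_gt1.
Qed.
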